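(* Let $p$ be a prime and $n$ an integer with $p>n\ge2$, let $q$ be a power of $p$, and let $\mathrm{disc}_n\in\mathbb{F}_q[a_0,\dots,a_n]$ be the generic discriminant of $\sum_{0\le i\le n}a_ix^i$. Then there is no nonzero $u\in\mathbb{F}_q^{n+1}$ with $\mathrm{disc}_n(a_0-u_0,\dots,a_n-u_n)=\mathrm{disc}_n(a_0,\dots,a_n)$; i.e. $\mathrm{disc}_n$ is not shift-invariant.
   Context: The generic discriminant $\mathrm{disc}_n$ is the reduction modulo $p$ of the integer polynomial in $a_0,\dots,a_n$ equal to $(-1)^{n(n-1)/2}a_n^{-1}\mathrm{Res}(f,f')$ for $f=\sum_{i}a_ix^i$ (equivalently $a_n^{2n-2}\prod_{i<j}(\alpha_i-\alpha_j)^2$ with $\alpha_i$ the roots of $f$); it is absolutely irreducible of degree $2n-2$ and its zero set is the hypersurface of non-squarefree polynomials. *)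

(* Defs.v *)
From HB Require Import structures.
From mathcomp Require Import all_boot all_order all_algebra all_field.
Set Implicit Arguments. Unset Strict Implicit. Unset Printing Implicit Defensive.
Import GRing.Theory.
Local Open Scope ring_scope.

Definition gen_poly (L : fieldType) (n : nat) (a : 'I_n.+1 -> L) : {poly L} :=
  \poly_(i < n.+1) a (inord i).

(* Value of the generic discriminant disc_n at a point a with a_n <> 0:
   (-1)^(n(n-1)/2) a_n^{-1} Res(f, f'),  f = sum a_i x^i.
   (Only meaningful when a_n != 0, where it agrees with the value of the
   polynomial disc_n; this is the only case used below.) *)
Definition disc_at (L : fieldType) (n : nat) (a : 'I_n.+1 -> L) : L :=
  (-1) ^+ ((n * n.-1)./2) * (a ord_max)^-1 *
  resultant (gen_poly a) (gen_poly a)^`().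

(* disc_n(a - u) = disc_n(a) as polynomials in F[a_0..a_n].  Since we have no
   multivariate polynomials, this polynomial identity is expressed as equality
   of values at every point of every field extension L of F on the Zariski-dense
   open set where a_n != 0 and a_n - u_n != 0 (equivalent to the polynomial
   identity, as extensions of F may be infinite). *)
Definition disc_shift_invariant (F : fieldType) (n : nat) (u : 'rV[F]_n.+1) : Prop :=
  forall (L : fieldType) (f : {rmorphism F -> L}) (a : 'I_n.+1 -> L),
    a ord_max != 0 -> a ord_max - f (u 0 ord_max) != 0 ->
    disc_at (fun i => a i - f (u 0 i)) = disc_at a.

(* Main.v *)
Require Import Defs.
From HB Require Import structures.
From mathcomp Require Import all_boot all_order all_algebra all_field.
From mathcomp Require Import ring.
Set Implicit Arguments. Unset Strict Implicit. Unset Printing Implicit Defensive.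
Import GRing.Theory.
Local Open Scope ring_scope.

Lemma gen_poly_coefs (L : fieldType) n (G : {poly L}) :
  (size G <= n.+1)%N -> gen_poly (fun i : 'I_n.+1 => G`_i) = G.
Proof.
move=> hs; apply/polyP => j; rewrite /gen_poly coef_poly.
case: ltnP => hj; first by rewrite inordK.
by rewrite nth_default // (leq_trans hs hj).
Qed.

Lemma disc_eq0 (L : closedFieldType) n (a : 'I_n.+1 -> L) :
  a ord_max != 0 ->
  (disc_at a = 0) <-> exists z, root (gen_poly a) z && root (gen_poly a)^`() z.
Proof.
move=> ha.
have P0 : gen_poly a != 0.
  apply/eqP => /(congr1 (fun q : {poly L} => q`_n)).
  rewrite coef0 /gen_poly coef_poly ltnSn => h.
  have E : inord n = ord_max :> 'I_n.+1 by apply/val_inj; rewrite /= inordK.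
  by rewrite E in h; rewrite h eqxx in ha.
rewrite /disc_at; split.
  move/eqP; rewrite !mulf_eq0 signr_eq0 invr_eq0 (negbTE ha) /= resultant_eq0 => hg.
  have /closed_rootP [z hz] : size (gcdp (gen_poly a) (gen_poly a)^`()) != 1%N.
    by rewrite neq_ltn hg orbT.
  by exists z; rewrite -root_gcd.
case=> z hz; apply/eqP; rewrite !mulf_eq0 resultant_eq0; apply/orP; right.
apply: (@root_size_gt1 _ z); last by rewrite root_gcd.
by rewrite gcdp_eq0 negb_and P0.
Qed.

Lemma sqfree (L : fieldType) n (lam mu r z : L) :
  (0 < n)%N -> n%:R != 0 :> L -> lam != 0 -> mu != 0 ->
  let G := lam *: ('X - r%:P)^+n + mu%:P in
  root G z -> root G^`() z -> False.
Proof.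
move=> n0 nn l0 m0 G; rewrite /G derivD derivC addr0 derivZ deriv_exp derivXsubC mul1r.
rewrite /root hornerZ hornerMn horner_exp hornerXsubC !mulf_eq0 (negbTE l0) /=.
rewrite -mulr_natr mulf_eq0 (negbTE nn) orbF expf_eq0 subr_eq0.
move=> hG /andP[_ /eqP zr]; move: hG; rewrite zr.
by rewrite hornerD hornerZ horner_exp hornerXsubC hornerC subrr expr0n eqn0Ngt n0 mulr0 add0r (negbTE m0).
Qed.

Lemma coefG (L : fieldType) n (lam mu r : L) : (0 < n)%N ->
  (lam *: ('X - r%:P)^+n + mu%:P)`_n = lam.
Proof.
move=> n0; rewrite coefD coefZ coefC eqn0Ngt n0 addr0.
have := monic_exp n (monicXsubC r); rewrite monicE /lead_coef size_exp_XsubC /=.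
by move/eqP => ->; rewrite mulr1.
Qed.

Lemma sizeG (L : fieldType) n (lam mu r : L) :
  (size (lam *: ('X - r%:P)^+n + mu%:P)%R <= n.+1)%N.
Proof.
apply: leq_trans (size_polyD _ _) _; rewrite geq_max.
rewrite (leq_trans (size_scale_leq _ _)) ?size_exp_XsubC //.
by rewrite (leq_trans (size_polyC_leq1 _)).
Qed.

Theorem mainTheorem17 (p n k : nat) (F : finFieldType) :
  prime p -> (2 <= n)%N -> (n < p)%N -> (0 < k)%N -> #|F| = (p ^ k)%N ->
  forall u : 'rV[F]_n.+1, u != 0 -> ~ disc_shift_invariant u.
Proof.
move=> pp n2 np k0 cF u u0 inv.
have n0 : (0 < n)%N by apply: leq_trans n2.
have [K [f _]] := countable_algebraic_closure F.
have charF : p \in [pchar F] := card_finPcharP cF pp.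
have charK : p \in [pchar K] := rmorph_pchar f charF.
have natK i : (0 < i)%N -> (i <= n)%N -> i%:R != 0 :> K.
  by move=> i0 iN; rewrite -(dvdn_pcharf charK) gtnNdvd // (leq_ltn_trans iN np).
pose U : {poly F} := gen_poly (u 0).
pose Uf := map_poly f U.
have Ucoef j : Uf`_j = if (j < n.+1)%N then f (u 0 (inord j)) else 0.
  rewrite coef_map /U /gen_poly coef_poly; case: ifP => _ //. exact: raddf0.
have sU : (size Uf <= n.+1)%N.
  by rewrite size_map_poly /U /gen_poly size_poly.
have Uf0 : Uf != 0.
  apply: contra u0 => /eqP U0; apply/eqP/matrixP => i j.
  rewrite (ord1 i) mxE; have := Ucoef j; rewrite U0 coef0 ltn_ord inord_val.
  by move/esym/eqP; rewrite fmorph_eq0 => /eqP.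
have key (lam mu r s : K) : lam != 0 -> mu != 0 -> lam != Uf`_n ->
    root (lam *: ('X - r%:P)^+n + mu%:P - Uf) s ->
    root (lam *: ('X - r%:P)^+n + mu%:P - Uf)^`() s -> False.
  move=> l0 m0 lU r1 r2.
  set G := lam *: ('X - r%:P)^+n + mu%:P in r1 r2.
  pose a := fun i : 'I_n.+1 => G`_i.
  have aG : gen_poly a = G by apply: gen_poly_coefs; apply: sizeG.
  have an : a ord_max = lam by rewrite /a coefG.
  have hsh : gen_poly (fun i => a i - f (u 0 i)) = G - Uf.
    apply/polyP => j; rewrite coefB Ucoef /gen_poly coef_poly -aG /gen_poly coef_poly.
    by case: ifP => _; rewrite ?subr0.
  have Un : f (u 0 ord_max) = Uf`_n.
    by rewrite Ucoef ltnSn; congr (f (u 0 _)); apply/val_inj; rewrite /= inordK.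
  have h1 : a ord_max != 0 by rewrite an.
  have h2 : a ord_max - f (u 0 ord_max) != 0 by rewrite an Un subr_eq0.
  have := inv K f a h1 h2.
  have -> : disc_at (fun i => a i - f (u 0 i)) = 0.
    by apply/(disc_eq0 h2); exists s; rewrite hsh r1 r2.
  move/esym/(disc_eq0 h1) => [z]; rewrite aG => /andP [z1 z2].
  exact: (sqfree n0 (natK n n0 (leqnn n)) l0 m0 z1 z2).
have nK : n%:R != 0 :> K := natK n n0 (leqnn n).
have En : n = n.-1.+1 by rewrite prednK.
have [dU0|dU0] := eqVneq Uf^`() 0.
  have Uj j : (0 < j)%N -> Uf`_j = 0.
    move=> j0; case: (leqP j n) => jn; last by rewrite nth_default // (leq_trans sU jn).
    have := coef_deriv Uf j.-1; rewrite dU0 coef0 prednK // => /esym/eqP.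
    by rewrite -mulr_natr mulf_eq0 (negbTE (natK j j0 jn)) orbF => /eqP.
  have UC : Uf = (Uf`_0)%:P.
    by apply/polyP => j; rewrite coefC; case: j => [|j] //=; rewrite Uj.
  apply: (key 1 (Uf`_0) 0 0).
  - exact: oner_neq0.
  - by apply: contra Uf0 => /eqP h; rewrite UC h.
  - by rewrite Uj // oner_neq0.
  - by rewrite /root {2}UC !hornerE oppr0 expr0n eqn0Ngt n0 /= add0r subrr.
  - rewrite derivB dU0 subr0 derivD derivC addr0 derivZ deriv_exp derivXsubC mul1r.
    by rewrite /root ?scale1r hornerMn horner_exp !hornerE oppr0 expr0n -subn1 subn_eq0 leqNgt (leq_trans _ n2) // mul0rn.
have [s hs] : exists s, root (Uf^`() * 'X + 1) s.
  apply/closed_rootP; rewrite size_polyDl; first by rewrite size_mulX // eqSS size_poly_eq0.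
  by rewrite size_mulX // size_polyC oner_neq0 ltnS lt0n size_poly_eq0.
have d0 : Uf^`().[s] != 0.
  apply/eqP => h; move: hs; rewrite /root !hornerE h mul0r add0r; exact/negP/oner_neq0.
set d := Uf^`().[s] in d0.
set c := Uf.[s].
set un := Uf`_n.
pose P := 'X * ((n%:R * c)%:P - d *: 'X) * ((n%:R * un) *: 'X^(n.-1) - d%:P).
have P0 : P != 0.
  rewrite !mulf_neq0 ?polyX_eq0 //.
    have : ((n%:R * c)%:P - d *: 'X)`_1 != 0.
      by rewrite coefB coefC coefZ coefX /= sub0r mulr1 oppr_eq0.
    by apply: contraNneq => ->; rewrite coef0.
  have : ((n%:R * un) *: 'X^(n.-1) - d%:P)`_0 != 0.
    by rewrite coefB coefC coefZ coefXn (eq_sym 0%N) -subn1 subn_eq0 leqNgt (leq_trans _ n2) // mulr0 sub0r oppr_eq0.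
  by apply: contraNneq => ->; rewrite coef0.
have [t ht] : exists t, root (P + 1) t.
  apply/closed_rootP; rewrite size_polyDl; last first.
    by rewrite size_polyC oner_neq0 (@root_size_gt1 _ 0) // /root /P !hornerE ?mul0r.
  by rewrite neq_ltn (@root_size_gt1 _ 0) ?orbT // /root /P !hornerE ?mul0r.
have hP : t * (n%:R * c - d * t) * (n%:R * un * t ^+ n.-1 - d) = - 1.
  by apply/eqP; rewrite -subr_eq0 opprK; move: ht; rewrite /root /P !hornerE.
have t0 : t != 0 by apply: contra_eq_neq hP => ->; rewrite !mul0r eq_sym oppr_eq0 oner_neq0.
have f2 : n%:R * c - d * t != 0.
  by apply: contra_eq_neq hP => ->; rewrite mulr0 mul0r eq_sym oppr_eq0 oner_neq0.
have f3 : n%:R * un * t ^+ n.-1 - d != 0.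
  by apply: contra_eq_neq hP => ->; rewrite mulr0 eq_sym oppr_eq0 oner_neq0.
have tn0 : t ^+ n.-1 != 0 by rewrite expf_neq0.
pose lam := d / (n%:R * t ^+ n.-1).
have Etn : t ^+ n = t * t ^+ n.-1 by rewrite {1}En exprS.
apply: (key lam (c - lam * t ^+ n) (s - t) s).
- by rewrite /lam mulf_neq0 // invr_neq0 // mulf_neq0.
- have -> : c - lam * t ^+ n = (n%:R * c - d * t) / n%:R.
    by rewrite /lam Etn; field; rewrite nK tn0.
  by rewrite mulf_neq0 // invr_neq0.
- apply: contra f3 => /eqP h; rewrite /un -h /lam.
  apply/eqP; field; by rewrite nK tn0.
- rewrite /root hornerD hornerD hornerN hornerZ horner_exp hornerXsubC hornerC -/c.
  have -> : s - (s - t) = t by ring.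
  by apply/eqP; ring.
- rewrite derivB derivD derivC addr0 derivZ deriv_exp derivXsubC mul1r.
  rewrite /root !hornerE -/d.
  rewrite hornerMn horner_exp hornerXsubC.
  have -> : s - (s - t) = t by ring.
  apply/eqP; rewrite /lam; field; by rewrite nK tn0.
Qed.
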